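(* Let $G=(K\cup I,E)$ be a split graph and $(V,\mathcal{F})$ the split graph vertex shelling antimatroid defined on $G$. Then for every $i\in I$, $$\mathcal{F}_i=\{\operatorname{fos}(i)\cup H:\ H \text{ is a filter of } (\operatorname{ufs}(i),\prec),\ H\cap K\neq\varnothing\}.$$
   Context: A split graph $G=(K\cup I,E)$ is a finite simple graph whose vertex set $V=K\cup I$ comes with a fixed partition into a clique $K$ and an independent set $I$. We write $u\sim v$ for adjacency; for $F\subseteq V$, $N(F)$ is the set of vertices of $V\setminus F$ adjacent to some vertex of $F$, and $N(v)=N(\{v\})$. A vertex is simplicial if its neighbours induce a clique. The split graph vertex shelling antimatroid of $G$ is $(V,\mathcal{F})$ where $F\subseteq V$ is feasible iff there is an ordering $f_1,\dots,f_{|F|}$ of $F$ such that each $f_j$ is simplicial in $G$ minus $\{f_1,\dots,f_{j-1}\}$ (the empty set is feasible). For $i\in I$, $\mathcal{F}_i$ is the family of feasible sets $F$ with $i\in N(F)$. Define $\operatorname{fos}(i)=\{k\in K: k\not\sim i\}\cup\{i'\in I: N(i')\not\subseteq N(i)\}$ and $\operatorname{ufs}(i)=V\setminus(\operatorname{fos}(i)\cup\{i\})=\big(\{k\in K:k\sim i\}\cup\{i'\in I: N(i')\subseteq N(i)\}\big)\setminus\{i\}$. The strict order $\prec$ on $K\cup I$ is $u\prec v$ iff $u\in K$, $v\in I$, $u\sim v$; $(\operatorname{ufs}(i),\prec)$ is its restriction to $\operatorname{ufs}(i)$. A filter of a poset is a subset $H$ such that $a\in H$ and $a\prec b$ imply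 $b\in H$. *)

(* Defs.v *)
From mathcomp Require Import all_boot.
Set Implicit Arguments. Unset Strict Implicit. Unset Printing Implicit Defensive.

Section SplitGraph.
Variables (T : finType) (e : rel T) (K : {set T}).
(* The independent part is I := ~: K. *)

Definition is_split_graph : Prop :=
  symmetric e /\ irreflexive e /\
  (forall u v, u \in K -> v \in K -> u != v -> e u v) /\
  (forall u v, u \notin K -> v \notin K -> ~~ e u v).

Definition nbh (F : {set T}) : {set T} :=
  [set v | (v \notin F) && [exists u in F, e u v]].

Definition nbh1 (v : T) : {set T} := nbh [set v].

Definition simplicial_in (S : {set T}) (v : T) : bool :=
  (v \notin S) &&
  [forall a, forall b,
     ((a \notin S) && (b \notin S) && e v a && e v b && (a != b)) ==> e a b].

Definition feasible (F : {set T}) : Prop :=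
  exists s : seq T, [/\ uniq s, [set x in s] = F &
    forall (s1 s2 : seq T) (x : T), s = s1 ++ x :: s2 ->
      simplicial_in [set y in s1] x].

Definition Fam (i : T) (F : {set T}) : Prop := feasible F /\ i \in nbh F.

Definition fos (i : T) : {set T} :=
  [set k in K | ~~ e k i] :|: [set i' in ~: K | ~~ (nbh1 i' \subset nbh1 i)].

Definition ufs (i : T) : {set T} := ~: (fos i :|: [set i]).

Definition prec (u v : T) : bool := [&& u \in K, v \notin K & e u v].

Definition is_filter (P H : {set T}) : bool :=
  (H \subset P) &&
  [forall a in P, forall b in P, ((a \in H) && prec a b) ==> (b \in H)].
End SplitGraph.

(* Main.v *)
Require Import Defs.
From mathcomp Require Import all_boot.
Set Implicit Arguments. Unset Strict Implicit. Unset Printing Implicit Defensive.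

Lemma in_nbh1 (T : finType) (e : rel T) (x v : T) :
  irreflexive e -> (v \in nbh1 e x) = e x v.
Proof.
move=> irr; rewrite /nbh1 /nbh !inE.
case: eqP => [->|_] /=; first by rewrite irr.
apply/existsP/idP => [[u /andP[]]|exv]; first by rewrite inE => /eqP ->.
by exists x; rewrite inE eqxx.
Qed.

Lemma in_fos (T : finType) (e : rel T) K i x : irreflexive e ->
  (x \in fos e K i) =
  ((x \in K) && ~~ e x i) || ((x \notin K) && ~~ [forall v, e x v ==> e i v]).
Proof.
move=> irr; rewrite /fos !inE; congr (_ || (_ && ~~ _)).
apply/subsetP/forallP => [H v|H v].
  by apply/implyP => xv; have := H v; rewrite !in_nbh1 //; apply.
by rewrite !in_nbh1 // => /(implyP (H v)).
Qed.

Lemma in_ufs (T : finType) (e : rel T) K i x :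
  (x \in ufs e K i) = (x \notin fos e K i) && (x != i).
Proof. by rewrite /ufs !inE negb_or. Qed.

Lemma simpP (T : finType) (e : rel T) S v a b : simplicial_in e S v ->
  a \notin S -> b \notin S -> e v a -> e v b -> a != b -> e a b.
Proof.
case/andP => _ /forallP H aS bS va vb ab.
by move: (H a) => /forallP /(_ b) /implyP; apply; rewrite aS bS va vb ab.
Qed.

Lemma split_mem (T : eqType) (x : T) s : x \in s -> exists s1 s2, s = s1 ++ x :: s2.
Proof. by case/splitPr => s1 s2; exists s1, s2. Qed.

Lemma uniq_split (T : eqType) (s1 s2 : seq T) x : uniq (s1 ++ x :: s2) -> x \notin s1.
Proof.
rewrite cat_uniq => /and3P[_ h _]; apply: contra h => xs1.
by apply/hasP; exists x; rewrite ?mem_head.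
Qed.

Theorem mainTheorem9 (T : finType) (e : rel T) (K : {set T}) :
  is_split_graph e K ->
  forall i : T, i \notin K ->
  forall F : {set T},
    Fam e i F <->
    exists H : {set T},
      [/\ is_filter e K (ufs e K i) H, H :&: K != set0 & F = fos e K i :|: H].
Proof.
case=> sym [irr [cliq indep]] i iI F.
have symE u v : e u v = e v u by apply: sym.
have KI u v : e u v -> v \notin K -> u \in K.
  by move=> uv vI; apply/negPn/negP => uI; move: (indep _ _ uI vI); rewrite uv.
have iNfos : i \notin fos e K i.
  by rewrite in_fos // (negbTE iI) /=; apply/negPn/forallP => v; apply/implyP.
have ufsK a : a \in K -> a \in ufs e K i -> e a i.
  by move=> aK; rewrite in_ufs in_fos // aK /= orbF negbK => /andP[].
split.
- case=> [[s [us sF Hs]] iN].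
  move: iN; rewrite /nbh inE => /andP[iF /existsP[k /andP[kF eki]]].
  have kK : k \in K := KI _ _ eki iI.
  have mem_s x : (x \in s) = (x \in F) by rewrite -sF inE.
  have [s1 [s2 sE]] := split_mem (x := k) (s := s) ltac:(by rewrite mem_s).
  have Hk := Hs s1 s2 k sE.
  have kS1 : k \notin s1 by apply: (@uniq_split _ s1 s2); rewrite -sE.
  have s1F x : x \in s1 -> x \in F by rewrite -mem_s sE mem_cat => ->.
  have iS1 : i \notin s1 by apply: contra iF; apply: s1F.
  have A k' : k' \in K -> ~~ e k' i -> k' \in s1.
    move=> k'K nk'i; apply/negPn/negP => k'S.
    have kk' : k != k' by apply: contraNneq nk'i => <-.
    have ik' : i != k' by apply: contraNneq iI => ->.
    have := simpP Hk (a := i) (b := k'); rewrite !inE iS1 k'S eki cliq //.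
    by rewrite ik' symE (negbTE nk'i) => /(_ isT isT isT isT isT).
  have fosF x : x \in fos e K i -> x \in F.
    rewrite in_fos //; case/orP => [/andP[xK nxi]|/andP[xI]].
      by apply: s1F; apply: A.
    case/forallPn => v; rewrite negb_imply => /andP[xv niv].
    have vK : v \in K by apply: (KI v x) => //; rewrite symE.
    have nvi : ~~ e v i by rewrite symE.
    have [t1 [t2 s1E]] := split_mem (A v vK nvi).
    have Hv := Hs t1 (t2 ++ k :: s2) v ltac:(by rewrite sE s1E -catA).
    have t1s1 y : y \in t1 -> y \in s1 by rewrite s1E mem_cat => ->.
    apply/idPn => xF.
    have xt1 : x \notin t1 by apply: contra xF => /t1s1; apply: s1F.
    have kt1 : k \notin t1 by apply: contra kS1; apply: t1s1.
    have vk : v != k by apply: contraNneq nvi => ->.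
    have xk : x != k by apply: contraNneq xI => ->.
    have exk : e x k.
      have := simpP Hv (a := x) (b := k); rewrite !inE xt1 kt1 symE xv cliq //.
      by move=> /(_ isT isT isT isT xk).
    have xS1 : x \notin s1 by apply: contra xF; apply: s1F.
    have ix : i != x by apply: contraNneq niv => ->.
    have := simpP Hk (a := i) (b := x); rewrite !inE iS1 xS1 eki (symE k x) exk ix.
    by move=> /(_ isT isT isT isT isT); rewrite (negbTE (indep _ _ iI xI)).
  exists (F :\: fos e K i); split.
  + apply/andP; split.
      apply/subsetP => x; rewrite in_setD in_ufs => /andP[-> xF] /=.
      by apply: contraNneq iF => <-.
    apply/forallP => a; apply/implyP => aP; apply/forallP => b; apply/implyP => bP.
    apply/implyP => /andP[aH /and3P[aK bK ab]].
    move: aH; rewrite in_setD => /andP[_ aF].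
    have eai := ufsK a aK aP.
    move: (bP); rewrite in_ufs => /andP[bf bi]; rewrite in_setD bf /=.
    have [t1 [t2 sE']] := split_mem (x := a) (s := s) ltac:(by rewrite mem_s).
    have Ha := Hs t1 t2 a sE'.
    have t1F y : y \in t1 -> y \in F by rewrite -mem_s sE' mem_cat => ->.
    apply/idPn => bF.
    have iT1 : i \notin [set y in t1] by rewrite inE; apply: contra iF; apply: t1F.
    have bT1 : b \notin [set y in t1] by rewrite inE; apply: contra bF; apply: t1F.
    have := simpP Ha iT1 bT1 eai ab; rewrite eq_sym bi (negbTE (indep _ _ iI bK)).
    by move=> /(_ isT).
  + apply/set0Pn; exists k; rewrite in_setI in_setD kK kF !andbT in_fos // kK eki; by [].
  + apply/setP => x; rewrite in_setU in_setD.
    by case: (boolP (x \in fos e K i)) => xf //=; rewrite fosF.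
- case=> H [/andP[Hsub /forallP Hfil] HK ->].
  have Hf a b : a \in ufs e K i -> b \in ufs e K i -> a \in H -> prec e K a b -> b \in H.
    by move=> aP bP aH pab; move: (Hfil a); rewrite aP => /forallP /(_ b);
      rewrite bP aH pab.
  case/set0Pn: HK => k; rewrite inE => /andP[kH kK].
  have kU : k \in ufs e K i by apply: (subsetP Hsub).
  have eki := ufsK k kK kU.
  set F0 := fos e K i :|: H.
  have iF : i \notin F0.
    rewrite in_setU negb_or iNfos /=; apply/negP => /(subsetP Hsub).
    by rewrite in_ufs eqxx andbF.
  split; last first.
    rewrite /nbh inE iF /=; apply/existsP; exists k.
    by rewrite in_setU kH orbT.
  pose r x := if x \in K then (if e x i then 2 else 1) else 0.
  pose le := fun x y => r x <= r y.
  exists (sort le (enum F0)); split.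
  + by rewrite sort_uniq enum_uniq.
  + by apply/setP => x; rewrite inE mem_sort mem_enum.
  move=> s1 s2 x sE.
  have srt : sorted le (sort le (enum F0)).
    by apply: sort_sorted => a b; apply: leq_total.
  rewrite sE in srt.
  have pth : path le x s2.
    move: srt; case: s1 {sE} => [|h t] //=; rewrite cat_path => /andP[_] /=.
    by case/andP.
  have tr : transitive le by move=> y a b; apply: leq_trans.
  have all2 := order_path_min tr pth.
  have xs1 : x \notin s1 by apply: (@uniq_split _ s1 s2); rewrite -sE sort_uniq enum_uniq.
  have xF : x \in F0 by rewrite -mem_enum -(mem_sort le) sE mem_cat mem_head orbT.
  have low y : y \in F0 -> r y < r x -> y \in s1.
    move=> yF ryx; have : y \in sort le (enum F0) by rewrite mem_sort mem_enum.
    rewrite sE mem_cat in_cons; case/or3P => // [/eqP yx|ys2].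
      by move: ryx; rewrite yx ltnn.
    by move: (allP all2 y ys2); rewrite /le leqNgt ryx.
  rewrite /simplicial_in inE xs1 /=; apply/forallP => a; apply/forallP => b.
  apply/implyP; rewrite !inE => /andP[/andP[/andP[/andP[aS bS] xa] xb] ab].
  case: (boolP (x \in K)) => xK; last first.
    have aK : a \in K by apply: (KI a x) => //; rewrite symE.
    have bK : b \in K by apply: (KI b x) => //; rewrite symE.
    by apply: cliq.
  have rx1 : 0 < r x by rewrite /r xK; case: (e x i).
  have claimI c : e x c -> c \notin K -> c \notin s1 -> (c == i) && e x i.
    move=> xc cK cs1.
    have cF : c \notin F0 by apply: contra cs1 => cF; apply: low; rewrite // /r (negbTE cK).
    move: cF; rewrite in_setU negb_or => /andP[cf cH].
    move: (cf); rewrite in_fos // (negbTE cK) /= negbK => /forallP cN.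
    have exi : e x i.
      by apply/idPn => nxi; have := implyP (cN x); rewrite (symE c x) xc (symE i x) (negbTE nxi) => /(_ isT).
    rewrite exi andbT; apply/idPn => ci.
    have xf : x \notin fos e K i by rewrite in_fos // xK exi.
    have xH : x \in H by move: xF; rewrite in_setU (negbTE xf).
    have cU : c \in ufs e K i by rewrite in_ufs cf.
    have xU : x \in ufs e K i by rewrite in_ufs xf; apply: contraNneq iI => <-.
    by move: cH; rewrite (Hf x c xU cU xH) // /prec xK cK xc.
  have claimK d : d \in K -> d \notin s1 -> e x i -> e d i.
    move=> dK ds1 exi; apply/idPn => ndi; move: ds1; rewrite low //.
      by rewrite in_setU in_fos // dK ndi.
    by rewrite /r dK xK exi (negbTE ndi).
  case: (boolP (a \in K)) => aK; case: (boolP (b \in K)) => bK.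
  - by apply: cliq.
  - by case/andP: (claimI b xb bK bS) => /eqP -> exi; apply: claimK aK aS exi.
  - case/andP: (claimI a xa aK aS) => /eqP ai exi; rewrite ai symE; apply: claimK bK bS exi.
    
  - case/andP: (claimI a xa aK aS) => /eqP ai _.
    case/andP: (claimI b xb bK bS) => /eqP bi _.
    by move: ab; rewrite ai bi eqxx.
Qed.
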